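(* Let $Z$ be a non-empty GTA zone and let $R\subseteq X_F$ be a set of future clocks such that for each $x\in R$ there is a valuation $v_x\in Z$ with $v_x(x)=-\infty$. Then there exist valuations $v\in Z$ such that $v(x)=-\infty$ for all $x\in R$.
   Context: $X=X_F\uplus X_H$ is a finite set of clocks (future clocks $X_F$, history clocks $X_H$) plus a constant clock $0$. $\overline{\mathbb{R}}=\mathbb{R}\cup\{\pm\infty\}$ with $(+\infty)+\alpha=+\infty$, $(-\infty)+\beta=-\infty$ for $\beta\neq+\infty$, $-(\pm\infty)=\mp\infty$. A valuation is $v:X\cup\{0\}\to\overline{\mathbb{R}}$ with $v(0)=0$, history clocks in $\mathbb{R}_{\ge 0}\cup\{+\infty\}$, future clocks in $\mathbb{R}_{\le0}\cup\{-\infty\}$. A GTA zone is a set of valuations defined by a conjunction of constraints $y-x\triangleleft c$ with $x,y\in X\cup\{0\}$, $c\in\mathbb{Z}\cup\{-\infty,+\infty\}$, ${\triangleleft}\in\{<,\le\}$, where $v\models y-x\triangleleft c$ iff $v(y)-v(x)\triangleleft c$. *)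

(* Defs.v *)
From Stdlib Require Import Reals ZArith List.
From Coquelicot Require Import Rbar.
Open Scope R_scope.

(* Clocks: a type C of (non-constant) clocks; [isF c = true] iff c is a future
   clock (X_F), otherwise c is a history clock (X_H).  The set X ∪ {0} is
   [option C], with [None] the constant clock 0. *)
Definition clk (C : Type) := option C.

Definition eadd (a b : Rbar) : Rbar :=
  match a, b with
  | p_infty, _ => p_infty
  | _, p_infty => p_infty
  | m_infty, _ => m_infty
  | _, m_infty => m_infty
  | Finite x, Finite y => Finite (x + y)
  end.

Definition esub (a b : Rbar) : Rbar := eadd a (Rbar_opp b).

Definition valuation (C : Type) (isF : C -> bool) (v : clk C -> Rbar) : Prop :=
  v None = Finite 0 /\
  forall c : C,
    if isF c then Rbar_le (v (Some c)) (Finite 0)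
    else Rbar_le (Finite 0) (v (Some c)).

Inductive zbar : Type := ZFin (z : Z) | ZPInf | ZMInf.

Definition zbar_to_Rbar (c : zbar) : Rbar :=
  match c with
  | ZFin z => Finite (IZR z)
  | ZPInf => p_infty
  | ZMInf => m_infty
  end.

Record constraint (C : Type) := mkConstraint {
  c_y : clk C; c_x : clk C; c_bound : zbar; c_strict : bool }.
Arguments mkConstraint {C}.
Arguments c_y {C}. Arguments c_x {C}. Arguments c_bound {C}. Arguments c_strict {C}.

Definition sat {C : Type} (v : clk C -> Rbar) (k : constraint C) : Prop :=
  let d := esub (v (c_y k)) (v (c_x k)) in
  if c_strict k then Rbar_lt d (zbar_to_Rbar (c_bound k))
  else Rbar_le d (zbar_to_Rbar (c_bound k)).

Definition is_GTA_zone (C : Type) (isF : C -> bool)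
    (Zn : (clk C -> Rbar) -> Prop) : Prop :=
  exists cs : list (constraint C),
    forall v, Zn v <-> (valuation C isF v /\ Forall (sat v) cs).

(* Main.v *)
Require Import Defs.
From Stdlib Require Import Reals ZArith List Classical Lra.
From Coquelicot Require Import Rbar.

Definition rmin (a b : Rbar) : Rbar :=
  match a, b with
  | m_infty, _ => m_infty
  | _, m_infty => m_infty
  | p_infty, b => b
  | a, p_infty => a
  | Finite x, Finite y => Finite (Rmin x y)
  end.

Lemma rmin_cases a b : rmin a b = a \/ rmin a b = b.
Proof.
  destruct a as [x| |], b as [y| |]; simpl; auto.
  unfold Rmin; destruct (Rle_dec x y); auto.
Qed.

Lemma rmin_l a b : Rbar_le (rmin a b) a.
Proof.
  destruct a as [x| |], b as [y| |]; simpl; auto; try lra.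
  apply Rmin_l.
Qed.

Lemma rmin_r a b : Rbar_le (rmin a b) b.
Proof.
  destruct a as [x| |], b as [y| |]; simpl; auto; try lra.
  apply Rmin_r.
Qed.

Lemma esub_mono a a' b : Rbar_le a a' -> Rbar_le (esub a b) (esub a' b).
Proof.
  destruct a as [x| |], a' as [x'| |], b as [y| |]; simpl; intros H;
    try contradiction; auto; try lra.
Qed.

Lemma sat_min {C} (v w : clk C -> Rbar) k :
  sat v k -> sat w k -> sat (fun z => rmin (v z) (w z)) k.
Proof.
  unfold sat; intros Hv Hw.
  destruct (rmin_cases (v (c_x k)) (w (c_x k))) as [E|E]; rewrite E.
  - assert (Hm := esub_mono _ _ (v (c_x k)) (rmin_l (v (c_y k)) (w (c_y k)))).
    destruct (c_strict k).
    + eapply Rbar_le_lt_trans; eauto.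
    + eapply Rbar_le_trans; eauto.
  - assert (Hm := esub_mono _ _ (w (c_x k)) (rmin_r (v (c_y k)) (w (c_y k)))).
    destruct (c_strict k).
    + eapply Rbar_le_lt_trans; eauto.
    + eapply Rbar_le_trans; eauto.
Qed.

Lemma val_min C isF v w : valuation C isF v -> valuation C isF w ->
  valuation C isF (fun z => rmin (v z) (w z)).
Proof.
  intros [H0 H1] [G0 G1]; split.
  - rewrite H0, G0; simpl; f_equal; unfold Rmin; destruct (Rle_dec 0 0); auto.
  - intro c; specialize (H1 c); specialize (G1 c); destruct (isF c).
    + eapply Rbar_le_trans; [apply rmin_l|exact H1].
    + destruct (rmin_cases (v (Some c)) (w (Some c))) as [E|E]; rewrite E; auto.
Qed.

Theorem lemma12
  (C : Type) (C_finite : exists l : list C, forall c, In c l)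
  (isF : C -> bool)
  (Zn : (clk C -> Rbar) -> Prop)
  (HZ : is_GTA_zone C isF Zn)
  (Hne : exists v, Zn v)
  (Rset : C -> Prop)
  (HRF : forall x, Rset x -> isF x = true)
  (HR : forall x, Rset x -> exists vx, Zn vx /\ vx (Some x) = m_infty) :
  exists v, Zn v /\ forall x, Rset x -> v (Some x) = m_infty.
Proof.
  destruct C_finite as [l Hl].
  destruct HZ as [cs Hcs].
  assert (Hmin : forall v w, Zn v -> Zn w -> Zn (fun z => rmin (v z) (w z))).
  { intros v w Hv Hw. apply Hcs in Hv; apply Hcs in Hw; apply Hcs.
    destruct Hv as [Hv1 Hv2], Hw as [Hw1 Hw2]. split.
    - apply val_min; auto.
    - rewrite Forall_forall in *. intros k Hk. apply sat_min; auto. }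
  assert (Gen : forall l', exists v, Zn v /\
            forall x, In x l' -> Rset x -> v (Some x) = m_infty).
  { induction l' as [|a l' IH].
    - destruct Hne as [v Hv]; exists v; split; auto; intros x [].
    - destruct IH as [v [Hv Hv']].
      destruct (classic (Rset a)) as [Ha|Ha].
      + destruct (HR a Ha) as [w [Hw Hwa]].
        exists (fun z => rmin (v z) (w z)); split; auto.
        intros x [<-|Hx] Hr.
        * rewrite Hwa; destruct (v (Some a)); reflexivity.
        * rewrite (Hv' x Hx Hr); reflexivity.
      + exists v; split; auto. intros x [<-|Hx] Hr; [contradiction|auto]. }
  destruct (Gen l) as [v [Hv Hv']]. exists v; split; auto.
Qed.
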